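(* Let $U,V$ be nonempty sets, $A,A^*$ fuzzy subsets of $U$ and $B$ a fuzzy subset of $V$. Let $\odot$ be a semi-overlap function having $1$ as neutral element and let $\rightarrow$ be its residual implication, $a\rightarrow b=\sup\{w\in[0,1]\mid a\odot w\le b\}$. Then the FMP-solution $B^*$ of the quintuple implication principle exists and is given, for every $v\in V$, by $$B^*(v)=\sup_{u\in U}\big\{A^*(u)\odot[(A^*(u)\rightarrow A(u))\odot(A(u)\rightarrow B(v))]\big\}.$$
   Context: A semi-overlap function is a function $\odot:[0,1]^2\to[0,1]$ such that for all $u,v\in[0,1]$: $u\odot v=v\odot u$; if $uv=0$ then $u\odot v=0$; if $uv=1$ then $u\odot v=1$; $\odot$ is increasing in each variable; and $\odot$ is left-continuous: $u\odot\sup_{i\in I}v_i=\sup_{i\in I}(u\odot v_i)$ for every $u$ and nonempty family $\{v_i\}_{i\in I}\subseteq[0,1]$. $1$ is a neutral element if $1\odot v=v$ for all $v$. A fuzzy subset of $U$ is a function $U\to[0,1]$; fuzzy subsets are ordered pointwise. Given $A,A^*$ on $U$ and $B$ on $V$, the FMP-solution of the quintuple implication principle is the minimum fuzzy subset $B^*$ of $V$ (with respect to the pointwise order) such that for all $u\in U,v\in V$, $$(A(u)\rightarrow B(v))\rightarrow\big((A^*(u)\rightarrow A(u))\rightarrow(A^*(u)\rightarrow B^*(v))\big)=1.$$ *)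

(* Defs.v *)
From mathcomp Require Import all_boot all_order all_algebra.
From mathcomp Require Import all_classical all_reals.
Set Implicit Arguments. Unset Strict Implicit. Unset Printing Implicit Defensive.
Import Order.TTheory GRing.Theory Num.Theory.
Local Open Scope classical_set_scope.
Local Open Scope ring_scope.

Section Defs.
Variable R : realType.

Definition unitI (x : R) : Prop := 0 <= x <= 1.

(* A semi-overlap function, viewed as a binary operation on R restricted to [0,1]. *)
Definition semi_overlap (O : R -> R -> R) : Prop :=
  (forall u v, unitI u -> unitI v -> unitI (O u v)) /\
  (forall u v, unitI u -> unitI v -> O u v = O v u) /\
  (forall u v, unitI u -> unitI v -> u * v = 0 -> O u v = 0) /\
  (forall u v, unitI u -> unitI v -> u * v = 1 -> O u v = 1) /\
  (forall u v w, unitI u -> unitI v -> unitI w -> v <= w ->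
      O u v <= O u w /\ O v u <= O w u) /\
      (forall u (I : Type) (v : I -> R), unitI u -> (exists i : I, True) ->
          (forall i, unitI (v i)) ->
          O u (sup (range v)) = sup (range (fun i => O u (v i)))).

Definition one_neutral (O : R -> R -> R) : Prop :=
  forall v, unitI v -> O 1 v = v.

Definition res_imp (O : R -> R -> R) (a b : R) : R :=
  sup [set w | unitI w /\ O a w <= b].

Definition fuzzy_subset (X : Type) (F : X -> R) : Prop := forall x, unitI (F x).

Definition QIP_FMP_condition (U V : Type) (imp : R -> R -> R)
    (A As : U -> R) (B Bs : V -> R) : Prop :=
  forall u v,
    imp (imp (A u) (B v)) (imp (imp (As u) (A u)) (imp (As u) (Bs v))) = 1.

Definition is_FMP_solution (U V : Type) (imp : R -> R -> R)
    (A As : U -> R) (B Bs : V -> R) : Prop :=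
  [/\ fuzzy_subset Bs,
      QIP_FMP_condition imp A As B Bs &
      forall C : V -> R, fuzzy_subset C -> QIP_FMP_condition imp A As B C ->
        forall v, Bs v <= C v].

End Defs.

(* Main.v *)
Require Import Defs.
From mathcomp Require Import all_boot all_order all_algebra.
From mathcomp Require Import all_classical all_reals.
Import Order.TTheory GRing.Theory Num.Theory.
Local Open Scope classical_set_scope.
Local Open Scope ring_scope.

Set Implicit Arguments. Unset Strict Implicit.
Section Aux.
Variable R : realType.
Variable O : R -> R -> R.
Hypothesis hO : semi_overlap O.
Hypothesis hN : one_neutral O.

Lemma O_unit u v : unitI u -> unitI v -> unitI (O u v).
Proof. by case: hO => H _; apply: H. Qed.

Lemma O_comm u v : unitI u -> unitI v -> O u v = O v u.
Proof. by case: hO => _ [H _]; apply: H. Qed.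

Lemma O_mono u v w : unitI u -> unitI v -> unitI w -> v <= w -> O u v <= O u w.
Proof. by case: hO => _ [_ [_ [_ [H _]]]] hu hv hw vw; case: (H u v w hu hv hw vw). Qed.

Lemma O_lc u (I : Type) (v : I -> R) : unitI u -> (exists i : I, True) ->
  (forall i, unitI (v i)) -> O u (sup (range v)) = sup (range (fun i => O u (v i))).
Proof. by case: hO => _ [_ [_ [_ [_ H]]]]; apply: H. Qed.

Lemma O_0 a : unitI a -> O a 0 = 0.
Proof.
case: hO => _ [_ [H _]] ha; apply: H => //; first by rewrite /unitI lexx ler01.
by rewrite mulr0.
Qed.

Let S a b := [set w | unitI w /\ O a w <= b].

Lemma S_ne a b : unitI a -> unitI b -> S a b !=set0.
Proof.
move=> ha hb; exists 0; split; first by rewrite /unitI lexx ler01.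
by rewrite O_0 //; case/andP: hb.
Qed.

Lemma S_ub a b : ubound (S a b) 1.
Proof. by move=> x [/andP[]]. Qed.

Lemma S_hs a b : unitI a -> unitI b -> has_sup (S a b).
Proof. by move=> ha hb; split; [exact: S_ne | exists 1; exact: S_ub]. Qed.

Lemma imp_ge a b w : unitI a -> unitI b -> unitI w -> O a w <= b ->
  w <= res_imp O a b.
Proof. move=> ha hb hw h; have := sup_upper_bound (S_hs ha hb); rewrite /ubound /= => H; by apply: H; split. Qed.

Lemma imp_unit a b : unitI a -> unitI b -> unitI (res_imp O a b).
Proof.
move=> ha hb; apply/andP; split.
  apply: imp_ge => //; first by rewrite /unitI lexx ler01.
  by rewrite O_0 //; case/andP: hb.
exact: ge_sup (S_ne ha hb) (@S_ub a b).
Qed.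

Lemma imp_adj a b : unitI a -> unitI b -> O a (res_imp O a b) <= b.
Proof.
move=> ha hb.
pose I := {w : R | unitI w /\ O a w <= b}.
pose v := fun i : I => sval i.
have -> : res_imp O a b = sup (range v).
  rewrite /res_imp; congr sup; rewrite predeqE => x; split.
    by move=> hx; exists (exist _ x hx).
  by case=> [[y hy]] _ <-.
have i0 : exists i : I, True.
  have h0 : unitI (0:R) /\ O a 0 <= b.
    by split; [rewrite /unitI lexx ler01 | rewrite O_0 //; case/andP: hb].
  by exists (exist _ 0 h0).
rewrite O_lc //; last by move=> i; case: (svalP i).
apply: ge_sup; first by case: i0 => i _; exists (O a (v i)), i.
by move=> x [i _ <-]; case: (svalP i).
Qed.

Lemma resid a b w : unitI a -> unitI b -> unitI w ->
  (O a w <= b <-> w <= res_imp O a b).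
Proof.
move=> ha hb hw; split => h.
  exact: imp_ge.
apply: le_trans (imp_adj ha hb).
by apply: O_mono => //; exact: imp_unit.
Qed.

Lemma O_1 a : unitI a -> O a 1 = a.
Proof.
move=> ha; rewrite O_comm ?hN //; by rewrite /unitI ler01 lexx.
Qed.

Lemma imp_one a b : unitI a -> unitI b -> (res_imp O a b = 1 <-> a <= b).
Proof.
move=> ha hb.
have h1 : unitI (1 : R) by rewrite /unitI ler01 lexx.
have := resid ha hb h1; rewrite O_1 // => ->.
case/andP: (imp_unit ha hb) => _ hle; split => [->//|h].
by apply/eqP; rewrite eq_le hle h.
Qed.

End Aux.
Unset Implicit Arguments. Set Strict Implicit.

Theorem theorem4p2 (R : realType) (U V : Type) (u0 : U) (v0 : V)
    (O : R -> R -> R) (A As : U -> R) (B : V -> R) :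
  semi_overlap O -> one_neutral O ->
  fuzzy_subset A -> fuzzy_subset As -> fuzzy_subset B ->
  is_FMP_solution (res_imp O) A As B
    (fun v => sup (range (fun u =>
        O (As u) (O (res_imp O (As u) (A u)) (res_imp O (A u) (B v)))))).
Proof.
move=> hO hN hA hAs hB.
pose T u v := O (As u) (O (res_imp O (As u) (A u)) (res_imp O (A u) (B v))).
have Tu u v : unitI (T u v).
  by apply: O_unit => //; apply: O_unit => //; apply: imp_unit.
have key : forall (C : V -> R), fuzzy_subset C -> forall u v,
   res_imp O (res_imp O (A u) (B v))
     (res_imp O (res_imp O (As u) (A u)) (res_imp O (As u) (C v))) = 1
   <-> T u v <= C v.
  move=> C hC u v.
  have i1 := imp_unit hO (hA u) (hB v).
  have i2 := imp_unit hO (hAs u) (hA u).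
  have i3 := imp_unit hO (hAs u) (hC v).
  rewrite imp_one //; last exact: imp_unit.
  rewrite -resid //. rewrite -resid //. exact: O_unit.
have ne v : range (fun u => T u v) !=set0 by exists (T u0 v), u0.
have hs v : has_sup (range (fun u => T u v)).
  by split => //; exists 1 => _ [u _ <-]; case/andP: (Tu u v).
have fz : fuzzy_subset (fun v => sup (range (fun u => T u v))).
  move=> v; apply/andP; split.
    apply: le_trans (sup_upper_bound (hs v) (ex_intro2 _ _ u0 I erefl)).
    by case/andP: (Tu u0 v).
  by apply: ge_sup => // _ [u _ <-]; case/andP: (Tu u v).
split => //.
  move=> u v; apply/(key _ fz).
  exact: (sup_upper_bound (hs v) (ex_intro2 _ _ u I erefl)).
move=> C hC hQ v; apply: ge_sup; first exact: ne. move=> _ [u _ <-].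
by apply/(key _ hC); apply: hQ.
Qed.
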